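(* Let $n\ge3$, let $S_n$ act on $V=\mathbb{C}^n$ by permutations, fix $a,b\in\mathbb{C}$, let $x$ be a $5$-cycle and $y$ a $3$-cycle, and let $\phi_{x,y}$ be the corresponding summand of the $(xy)$-component of $\phi(\kappa^C_{\mathrm{penta}},\kappa^L_{\mathrm{tri}})$. For basis vectors $e_i,e_j,e_k$: (1) if $e_i,e_j\in V^y$, then $\phi_{x,y}(e_i,e_j,e_k)=0$; (2) if $e_i\in V^y\cap V^x$, then $\phi_{x,y}(e_i,e_j,e_k)=0$; (3) if $e_i\in V^y\setminus V^x$ and $e_j\notin V^y$, then $\phi_{x,y}(e_i,e_j,ye_j)=2(a-b)^3\big[\delta_y(xe_i)-2\delta_y(x^2e_i)+2\delta_y(x^{-2}e_i)-\delta_y(x^{-1}e_i)\big]$; (4) if $e_i\notin V^y$, then $\phi_{x,y}(e_i,ye_i,y^2e_i)=0$.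
   Context: $S_n$ acts by $\sigma e_i=e_{\sigma(i)}$; $V^g$ is the fixed space of $g$; $\delta_y(v)=1$ if $v\in V^y$ and $0$ otherwise. $\kappa^L_{\mathrm{tri}}$ is the linear 2-cochain supported on 3-cycles with $\kappa^L_{(ijk)}(e_i,e_j)=\kappa^L_{(ijk)}(e_j,e_k)=\kappa^L_{(ijk)}(e_k,e_i)=a(e_i+e_j+e_k)+b\sum_{l\notin\{i,j,k\}}e_l$ and $\kappa^L_{(ijk)}(e_l,e_m)=0$ whenever $e_l$ or $e_m$ lies in $V^{(ijk)}$. $\kappa^C_{\mathrm{penta}}$ is the constant 2-cochain with $\kappa^C_g=0$ unless $g$ is a 5-cycle, and for a 5-cycle $g$, $\kappa^C_g(e_i,e_j)=(a-b)^2([g]_{ij}-[g]_{ji}-2[g^2]_{ij}+2[g^2]_{ji})$, where $[h]_{ij}=1$ if $i=h(j)$ and $0$ otherwise. For $\alpha$ constant and $\beta$ linear, $\phi(\alpha,\beta)_g=\sum_{xy=g}\phi_{x,y}$ with $\phi_{x,y}(v_1,v_2,v_3)=\alpha_x(v_1+yv_1,\beta_y(v_2,v_3))+\alpha_x(v_2+yv_2,\beta_y(v_3,v_1))+\alpha_x(v_3+yv_3,\beta_y(v_1,v_2))$; here $\alpha=\kappa^C_{\mathrm{penta}}$, $\beta=\kappa^L_{\mathrm{tri}}$. *)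

(* Defs.v *)
From mathcomp Require Import all_boot all_order all_fingroup all_algebra.
Set Implicit Arguments. Unset Strict Implicit. Unset Printing Implicit Defensive.
Import GRing.Theory.
Local Open Scope ring_scope.

Section Cochains.
Variables (C : numClosedFieldType) (n : nat).

Definition V := 'rV[C]_n.
Definition e (i : 'I_n) : V := delta_mx 0 i.

(* sigma e_i = e_{sigma i}, extended linearly *)
Definition pact (s : 'S_n) (v : V) : V := \row_m v 0 (s^-1 m)%g.

Definition fixed_space (g : 'S_n) : pred V := fun v => pact g v == v.

Definition delta (y : 'S_n) (v : V) : C := if v \in fixed_space y then 1 else 0.

Definition is_kcycle (k : nat) (g : 'S_n) : bool :=
  [exists i, (#|porbit g i| == k) && [forall j, (j \notin porbit g i) ==> (g j == j)]].

Definition brk (h : 'S_n) (i j : 'I_n) : C := if i == h j then 1 else 0.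

Variables (a b : C).

Definition kL_basis (g : 'S_n) (l m : 'I_n) : V :=
  let c : V := \row_p (if g p != p then a else b) in
  if is_kcycle 3 g && (g l != l) && (g m != m) then
    (if m == g l then c else if l == g m then - c else 0)
  else 0.

Definition kL (g : 'S_n) (u v : V) : V :=
  \sum_(l < n) \sum_(m < n) (u 0 l * v 0 m) *: kL_basis g l m.

Definition kC_basis (g : 'S_n) (l m : 'I_n) : C :=
  if is_kcycle 5 g then
    (a - b) ^+ 2 * (brk g l m - brk g m l - 2 * brk (g * g)%g l m + 2 * brk (g * g)%g m l)
  else 0.

Definition kC (g : 'S_n) (u v : V) : C :=
  \sum_(l < n) \sum_(m < n) (u 0 l * v 0 m) * kC_basis g l m.

Definition phi_xy (x y : 'S_n) (v1 v2 v3 : V) : C :=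
  kC x (v1 + pact y v1) (kL y v2 v3)
  + kC x (v2 + pact y v2) (kL y v3 v1)
  + kC x (v3 + pact y v3) (kL y v1 v2).

End Cochains.

(* Main.v *)
Require Import Defs.
From mathcomp Require Import all_boot all_order all_fingroup all_algebra.
From mathcomp Require Import ring.
Import GRing.Theory Num.Theory.
Local Open Scope ring_scope.

Section Aux.
Variables (C : numClosedFieldType) (n : nat).
Implicit Types (i j k l m p : 'I_n) (s h x y : 'S_n).

Lemma eE i k : (e C i) 0 k = (k == i)%:R.
Proof. by rewrite /e mxE eqxx. Qed.

Lemma pactE s i : pact s (e C i) = e C (s i).
Proof.
apply/rowP => k; rewrite mxE !eE.
by rewrite -(inj_eq (@perm_inj _ s)) permKV.
Qed.

Lemma e_inj i j : (e C i == e C j) = (i == j).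
Proof.
apply/eqP/eqP => [h|->] //.
have := congr1 (fun v : V C n => v 0 j) h; rewrite !eE eqxx.
by case: eqP => // _ /eqP; rewrite eq_sym oner_eq0.
Qed.

Lemma fixE s i : (e C i \in fixed_space s) = (s i == i).
Proof. by rewrite unfold_in /fixed_space pactE e_inj. Qed.

Lemma sum_pick (F : 'I_n -> C) p : \sum_m F m * (m == p)%:R = F p.
Proof.
rewrite (bigD1 p) //= eqxx mulr1 big1 ?addr0 // => m /negbTE ->.
by rewrite mulr0.
Qed.

Lemma sum_pickl (F : 'I_n -> C) p : \sum_m (m == p)%:R * F m = F p.
Proof. by rewrite -[RHS](sum_pick F p); apply: eq_bigr => m _; rewrite mulrC. Qed.

Lemma sum_pickZ (G : 'I_n -> V C n) p : \sum_m (m == p)%:R *: G m = G p.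
Proof.
rewrite (bigD1 p) //= eqxx scale1r big1 ?addr0 // => m /negbTE ->.
by rewrite scale0r.
Qed.

Variables (a b : C).

Lemma kC_e x l (w : V C n) :
  kC a b x (e C l) w = \sum_m w 0 m * kC_basis a b x l m.
Proof.
rewrite /kC (eq_bigr (fun l' => (l' == l)%:R * \sum_m w 0 m * kC_basis a b x l' m)).
  by rewrite sum_pickl.
move=> l' _; rewrite mulr_sumr; apply: eq_bigr => m _; by rewrite eE mulrA.
Qed.

Lemma kCD x (u u' w : V C n) : kC a b x (u + u') w = kC a b x u w + kC a b x u' w.
Proof.
rewrite /kC -big_split; apply: eq_bigr => l _; rewrite -big_split.
by apply: eq_bigr => m _; rewrite mxE !mulrDl.
Qed.

Lemma kC0 x (u : V C n) : kC a b x u 0 = 0.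
Proof.
rewrite /kC big1 // => l _; rewrite big1 // => m _; rewrite mxE; ring.
Qed.

Lemma kL_e y l m : kL a b y (e C l) (e C m) = kL_basis a b y l m.
Proof.
rewrite /kL (eq_bigr (fun l' => (l' == l)%:R *: kL_basis a b y l' m)).
  by rewrite sum_pickZ.
move=> l' _.
rewrite (eq_bigr (fun m' => (l' == l)%:R *: ((m' == m)%:R *: kL_basis a b y l' m'))).
  by rewrite -scaler_sumr sum_pickZ.
by move=> m' _; rewrite !eE scalerA.
Qed.

Lemma kLb0l y l m : y l = l -> kL_basis a b y l m = 0.
Proof. by move=> h; rewrite /kL_basis h eqxx andbF. Qed.

Lemma kLb0r y l m : y m = m -> kL_basis a b y l m = 0.
Proof. by move=> h; rewrite /kL_basis h eqxx andbF. Qed.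

Definition crow y : V C n := \row_p (if y p != p then a else b).

Lemma kLbc y l m : is_kcycle 3 y -> y l != l -> m = y l ->
  kL_basis a b y l m = crow y.
Proof.
move=> hy hl ->; rewrite /kL_basis hy hl (inj_eq (@perm_inj _ y)) hl eqxx.
by [].
Qed.

Lemma brk_l (w : 'I_n -> C) h l : \sum_m w m * brk C h l m = w (h^-1 l)%g.
Proof.
rewrite -[RHS](sum_pick w); apply: eq_bigr => m _; rewrite /brk.
have -> : (l == h m) = (m == (h^-1)%g l).
  by rewrite -{1}(permKV h l) (inj_eq (@perm_inj _ h)) eq_sym.
by case: (m == _).
Qed.

Lemma brk_r (w : 'I_n -> C) h l : \sum_m w m * brk C h m l = w (h l).
Proof. by rewrite -[RHS](sum_pick w); apply: eq_bigr => m _; rewrite /brk; case: (m == _). Qed.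

Lemma Kform x l (w : 'I_n -> C) : is_kcycle 5 x ->
  \sum_m w m * kC_basis a b x l m =
  (a - b) ^+ 2 * (w (x^-1 l)%g - w (x l) - 2 * w ((x * x)^-1 l)%g + 2 * w ((x * x)%g l)).
Proof.
move=> hx; rewrite -brk_l -brk_r -[w ((x * x)^-1 l)%g]brk_l -[w ((x * x)%g l)]brk_r.
rewrite !mulr_sumr -!sumrN -!big_split /= mulr_sumr; apply: eq_bigr => m _.
rewrite /kC_basis hx /=; ring.
Qed.

Lemma Kanti x l m : kC_basis a b x m l = - kC_basis a b x l m.
Proof. by rewrite /kC_basis; case: ifP => _; [ring | rewrite oppr0]. Qed.

Lemma Ksum0 x l : \sum_m kC_basis a b x l m = 0.
Proof.
case hx: (is_kcycle 5 x); last by rewrite big1 // => m _; rewrite /kC_basis hx.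
rewrite (eq_bigr (fun m => 1 * kC_basis a b x l m)); last by move=> m _; rewrite mul1r.
by rewrite (@Kform x l (fun _ => 1)) //; ring.
Qed.

Lemma anti_sum0 x (sv : 'I_n -> C) :
  \sum_l sv l * \sum_m (b + (a - b) * sv m) * kC_basis a b x l m = 0.
Proof.
set S := \sum_l \sum_m sv l * sv m * kC_basis a b x l m.
have hS : S = - S.
  rewrite {1}/S exchange_big /S -sumrN; apply: eq_bigr => l _.
  rewrite -sumrN; apply: eq_bigr => m _; rewrite (Kanti x m l); ring.
have S0 : S = 0.
  have : 2 * S = 0 by rewrite mulr2n mulrDl mul1r {2}hS subrr.
  move/eqP; rewrite mulf_eq0 => /orP[|/eqP//].
  by rewrite pnatr_eq0.
transitivity (b * \sum_l sv l * \sum_m kC_basis a b x l m + (a - b) * S).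
  rewrite mulr_sumr /S mulr_sumr -big_split; apply: eq_bigr => l _.
  rewrite !mulr_sumr -big_split; apply: eq_bigr => m _; rewrite /=; ring.
rewrite S0 mulr0 addr0 big1 ?mulr0 // => l _; by rewrite Ksum0 mulr0.
Qed.

Lemma cycle3 y i : is_kcycle 3 y -> y i != i ->
  y (y (y i)) = i /\
  forall p, (p == i)%:R + (p == y i)%:R + (p == y (y i))%:R = (y p != p)%:R :> C.
Proof.
case/existsP => j0 /andP[/eqP hc /forallP hf] hi.
have hin q : y q != q -> q \in porbit y j0.
  move=> hq; apply/negPn/negP => hn; move: hq.
  by rewrite (eqP (implyP (hf q) hn)) eqxx.
have po : porbit y i = porbit y j0 by apply/eqP; rewrite eq_porbit_mem hin.
have hc3 : #|porbit y i| = 3 by rewrite po.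
have it := iter_porbit y i; rewrite hc3 /= in it.
have un := uniq_traject_porbit y i; rewrite hc3 /= in un.
have tr := porbit_traject y i; rewrite hc3 /= in tr.
move: un; rewrite !inE !negb_or andbT => /andP[/andP[u1 u2] u3].
split => // p.
case hp: (y p != p).
  have : p \in porbit y i by rewrite po hin.
  rewrite tr !inE => /or3P[] /eqP ->; rewrite !eqxx.
  - by rewrite (negbTE u1) (negbTE u2) /= ?mulr0n ?mulr1n ?addr0 ?add0r.
  - by rewrite eq_sym (negbTE u1) (negbTE u3) /= ?mulr0n ?mulr1n ?addr0 ?add0r.
  - by rewrite eq_sym (negbTE u2) eq_sym (negbTE u3) /= ?mulr0n ?mulr1n ?addr0 ?add0r.
move/negbFE/eqP: hp => hp.
have n1 : p != i by apply: contraNneq hi => <-; rewrite hp.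
have n2 : p != y i.
  by apply: contraNneq hi => e1; rewrite -(inj_eq (@perm_inj _ y)) -e1 hp.
have n3 : p != y (y i).
  by apply: contraNneq u2 => e1; rewrite -e1 -{1}it -e1 hp eqxx.
by rewrite (negbTE n1) (negbTE n2) (negbTE n3) /= ?mulr0n ?mulr1n ?addr0 ?add0r.
Qed.

Lemma crow_d y p : crow y 0 p = a - (a - b) * delta y (e C p).
Proof. by rewrite /crow mxE /delta fixE; case: (y p == p) => /=; ring. Qed.

Lemma crow_s y p : crow y 0 p = b + (a - b) * (y p != p)%:R.
Proof. by rewrite /crow mxE; case: (y p != p) => /=; rewrite ?mulr1n ?mulr0n; ring. Qed.

End Aux.

Theorem lemma7p6 (C : numClosedFieldType) (n : nat) (hn : (3 <= n)%N)
  (a b : C) (x y : 'S_n) (hx : is_kcycle 5 x) (hy : is_kcycle 3 y) :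
  (forall i j k : 'I_n,
     e C i \in fixed_space y -> e C j \in fixed_space y ->
     phi_xy a b x y (e C i) (e C j) (e C k) = 0) /\
  (forall i j k : 'I_n,
     e C i \in fixed_space y -> e C i \in fixed_space x ->
     phi_xy a b x y (e C i) (e C j) (e C k) = 0) /\
  (forall i j : 'I_n,
     e C i \in fixed_space y -> e C i \notin fixed_space x ->
     e C j \notin fixed_space y ->
     phi_xy a b x y (e C i) (e C j) (pact y (e C j)) =
       2 * (a - b) ^+ 3 *
       (delta y (pact x (e C i)) - 2 * delta y (pact (x ^+ 2)%g (e C i))
        + 2 * delta y (pact (x ^- 2)%g (e C i)) - delta y (pact x^-1%g (e C i)))) /\
  (forall i : 'I_n,
     e C i \notin fixed_space y ->
     phi_xy a b x y (e C i) (pact y (e C i)) (pact (y ^+ 2)%g (e C i)) = 0).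
Proof.
split; [|split; [|split]].
- move=> i j k; rewrite !fixE => /eqP hi /eqP hj.
  rewrite /phi_xy !pactE !kL_e (@kLb0l C n a b y j k hj) (@kLb0r C n a b y k i hi).
  by rewrite (@kLb0l C n a b y i j hi) !kC0 !addr0.
- move=> i j k; rewrite !fixE => /eqP hi /eqP hx1.
  rewrite /phi_xy !pactE !kL_e (@kLb0r C n a b y k i hi) (@kLb0l C n a b y i j hi).
  rewrite !kC0 !addr0 hi kCD !kC_e.
  rewrite (@Kform C n a b x i (fun m => kL_basis a b y j k 0 m) hx).
  have hxi : (x^-1)%g i = i by rewrite -{1}hx1 permK.
  have hxx : (x * x)%g i = i by rewrite permM !hx1.
  have hxxi : ((x * x)^-1)%g i = i by rewrite -{1}hxx permK.
  rewrite hxi hx1 hxx hxxi; ring.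
- move=> i j; rewrite !fixE => /eqP hi _ hj.
  rewrite /phi_xy !pactE !kL_e (@kLb0r C n a b y (y j) i hi) (@kLb0l C n a b y i j hi).
  rewrite !kC0 !addr0 hi (@kLbc C n a b y j (y j) hy hj erefl) kCD !kC_e.
  rewrite (@Kform C n a b x i (fun m => crow C n a b y 0 m) hx) !crow_d ?pactE expgS expg1.
  ring.
- move=> i; rewrite fixE => hi.
  have [it hs] := @cycle3 C n y i hy hi.
  have h1 : y (y i) != y i by rewrite (inj_eq (@perm_inj _ y)).
  have h2 : y (y (y i)) != y (y i) by rewrite !(inj_eq (@perm_inj _ y)).
  rewrite /phi_xy !pactE expgS expg1 permM ?pactE it !kL_e.
  rewrite (@kLbc C n a b y (y i) (y (y i)) hy h1 erefl).
  rewrite (@kLbc C n a b y (y (y i)) i hy h2 (esym it)).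
  rewrite (@kLbc C n a b y i (y i) hy hi erefl).
  rewrite !kCD !kC_e.
  pose T := fun l => \sum_m crow C n a b y 0 m * kC_basis a b x l m.
  have E : T i + T (y i) + T (y (y i)) = 0.
    transitivity (\sum_l ((l == i)%:R * T l + (l == y i)%:R * T l + (l == y (y i))%:R * T l)).
      by rewrite !big_split /= !sum_pickl.
    rewrite -[RHS](@anti_sum0 C n a b x (fun l => (y l != l)%:R)).
    apply: eq_bigr => l _; rewrite -!mulrDl hs /T; congr (_ * _).
    by apply: eq_bigr => m _; rewrite crow_s.
  transitivity (2 * (T i + T (y i) + T (y (y i)))); last by rewrite E mulr0.
  rewrite /T; ring.
Qed.
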